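(* Let $n\ge 1$, $d\ge 1$ and $R=\mathbb{C}[x_0,\dots,x_n]$. A tuple $(f_{ij}: 0\le i<j\le n)\in R_d^{\binom{n+1}{2}}$ is the tuple of determinantal equations of the eigenscheme of a partially symmetric tensor, i.e. there exist $g_0,\dots,g_n\in R_{d-1}$ with $f_{ij}=x_ig_j-x_jg_i$ for all $0\le i<j\le n$, if and only if $$x_if_{jk}-x_jf_{ik}+x_kf_{ij}=0\quad\text{for every }0\le i<j<k\le n.$$
   Context: A partially symmetric tensor is identified with a tuple $T=(g_0,\dots,g_n)$ of homogeneous polynomials $g_i\in\mathbb{C}[x_0,\dots,x_n]_{d-1}$; the determinantal equations of its eigenscheme $E(T)$ are the $2\times 2$ minors $x_ig_j-x_jg_i$ ($0\le i<j\le n$) of the matrix $\begin{pmatrix} x_0&\dots&x_n\\ g_0&\dots&g_n\end{pmatrix}$. *)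

(* Defs.v *)
From HB Require Import structures.
From mathcomp Require Import all_boot all_order all_algebra.
From mathcomp Require Import reals.
From mathcomp Require Import complex.
From mathcomp Require Import mpoly.
Set Implicit Arguments. Unset Strict Implicit. Unset Printing Implicit Defensive.
Import Order.TTheory GRing.Theory Num.Theory.
Local Open Scope ring_scope.

(* The complex numbers C = R[i] for a model R of the real numbers. *)
(* Polynomial ring C[x_0,...,x_n] = {mpoly R[i][n.+1]}; x_i = 'X_i. *)

(* Main.v *)
Require Import Defs.
From HB Require Import structures.
From mathcomp Require Import all_boot all_order all_algebra.
From mathcomp Require Import reals complex mpoly.
From mathcomp Require Import ring zify.
Set Implicit Arguments. Unset Strict Implicit. Unset Printing Implicit Defensive.
Import Order.TTheory GRing.Theory Num.Theory.
Local Open Scope ring_scope.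

Section Aux.
Variables (K : comNzRingType) (n : nat).
Implicit Types (p : {mpoly K[n]}).

Lemma mderiv_Xi (i k : 'I_n) : ('X_i : {mpoly K[n]})^`M(k) = (i == k)%:R.
Proof.
rewrite mderivX mnm1E; case: eqVneq => [->|_]; last by rewrite scale0r.
have -> : (U_(k) - U_(k) = 0)%MM by apply/mnmP=> j; rewrite mnmBE subnn mnm0E.
by rewrite mpolyX0 scale1r.
Qed.

Lemma euler_mono (m : 'X_{1..n}) :
  \sum_k ('X_k : {mpoly K[n]}) * ('X_[m])^`M(k) = 'X_[m] *+ mdeg m.
Proof.
have -> : \sum_k ('X_k : {mpoly K[n]}) * ('X_[m])^`M(k) = \sum_k 'X_[m] *+ m k.
  apply: eq_bigr => k _; rewrite mderivX -scalerAr -mpolyXD scaler_nat.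
  have [mk0|mk] := posnP (m k); first by rewrite mk0 !mulr0n.
  congr (_ *+ _); congr 'X_[_]; apply/mnmP => j.
  rewrite mnmDE mnmBE mnm1E; case: eqVneq => [<-|_]; last by rewrite subn0.
  by rewrite add1n subn1 prednK.
by rewrite mdegE sumrMnr.
Qed.

Lemma euler p d : p \is d.-homog ->
  \sum_k 'X_k * p^`M(k) = p *+ d.
Proof.
move=> /dhomogP hp.
rewrite {1 2}(mpolyE p).
under eq_bigr do rewrite raddf_sum mulr_sumr.
rewrite exchange_big /= -sumrMnl big_seq [RHS]big_seq; apply: eq_bigr => m hm.
under eq_bigr do rewrite mderivZ -scalerAr.
by rewrite -scaler_sumr euler_mono hp // scalerMnr.
Qed.

Lemma mderiv_homog p d k : p \is d.-homog -> p^`M(k) \is d.-1.-homog.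
Proof.
move=> /dhomogP hp; apply/dhomogP => m; rewrite mcoeff_msupp mcoeff_mderiv.
move=> h; have : p@_(m + U_(k)) != 0 by apply: contraNneq h => ->; rewrite mul0rn.
rewrite -mcoeff_msupp => /hp. move=> <- /=. by rewrite mdegD mdeg1 addn1.
Qed.

Lemma sum_delta (m : nat) (x : 'I_m -> {mpoly K[n]}) (i : 'I_m) :
  \sum_k (i == k)%:R * x k = x i.
Proof.
rewrite (bigD1 i) //= eqxx mul1r big1 ?addr0 // => k hk.
by rewrite eq_sym (negbTE hk) mul0r.
Qed.

End Aux.

Lemma aux_lin (T : comNzRingType) (u v x : T) (n d : nat) :
  - x + u - (x + v) + (x *+ n.+1 + x *+ d.+1) = 0 ->
  u - v = - (x * (n + d)%:R).
Proof.
move=> h; apply/eqP; rewrite -subr_eq0; apply/eqP; rewrite -[RHS]h.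
rewrite natrD; ring.
Qed.

Theorem theorem3p1 (R : realType) (n d : nat) (hn : (1 <= n)%N) (hd : (1 <= d)%N)
  (f : 'I_n.+1 -> 'I_n.+1 -> {mpoly R[i][n.+1]})
  (hf : forall i j : 'I_n.+1, (i < j)%N -> f i j \is d.-homog) :
  (exists g : 'I_n.+1 -> {mpoly R[i][n.+1]},
      (forall i, g i \is d.-1.-homog) /\
      (forall i j : 'I_n.+1, (i < j)%N -> f i j = 'X_i * g j - 'X_j * g i))
  <->
  (forall i j k : 'I_n.+1, (i < j)%N -> (j < k)%N ->
      'X_i * f j k - 'X_j * f i k + 'X_k * f i j = 0).
Proof.
split.
  move=> [g [_ hg]] i j k hij hjk.
  rewrite (hg _ _ hij) (hg _ _ hjk) (hg _ _ (ltn_trans hij hjk)); ring.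
move=> H.
case: d hd hf => // d' _ hf.
pose F (i j : 'I_n.+1) := if (i < j)%N then f i j else if (j < i)%N then - f j i else 0.
have FA : forall i j, F j i = - F i j.
  move=> i j; rewrite /F; case: ltngtP => _; rewrite ?opprK ?oppr0 //.
have F0 : forall i, F i i = 0 by move=> i; rewrite /F ltnn.
have HF : forall i j, F i j \is d'.+1.-homog.
  move=> i j; rewrite /F; case: ltngtP => h; rewrite ?rpredN ?hf //.
  exact: rpred0.
pose Rl (i j k : 'I_n.+1) := 'X_i * F j k - 'X_j * F i k + 'X_k * F i j.
have key : forall a b c : 'I_n.+1, (a < b)%N -> (b < c)%N -> Rl a b c = 0.
  move=> a b c hab hbc; rewrite /Rl /F hab hbc (ltn_trans hab hbc); exact: H.
have s12 : forall a b c : 'I_n.+1, Rl a b c = - Rl b a c.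
  by move=> a b c; rewrite /Rl (FA a b); ring.
have s23 : forall a b c : 'I_n.+1, Rl a b c = - Rl a c b.
  by move=> a b c; rewrite /Rl (FA b c); ring.
have Rall : forall i j k : 'I_n.+1, Rl i j k = 0.
{ move=> i j k.
  case: (ltngtP i j) => [hij|hij|/val_inj eij]; [ | | by rewrite /Rl eij F0; ring].
  all: case: (ltngtP j k) => [hjk|hjk|/val_inj ejk]; [ | | by rewrite /Rl ejk F0; ring].
  all: case: (ltngtP i k) => [hik|hik|/val_inj eik]; [ | | by rewrite /Rl eik (FA k j) F0; ring].
  all: first [ by rewrite key
             | by rewrite (s12 i j k) key ?oppr0
             | by rewrite (s23 i j k) key ?oppr0
             | by rewrite (s23 i j k) (s12 i k j) opprK key
             | by rewrite (s12 i j k) (s23 j i k) opprK key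
             | by rewrite (s12 i j k) (s23 j i k) opprK (s12 j k i) key ?oppr0
             | exfalso; lia ]. }
pose G (a : 'I_n.+1) := \sum_k (F a k)^`M(k).
have eqG : forall i j : 'I_n.+1,
    'X_i * G j - 'X_j * G i = - (F i j * (n + d')%:R).
  move=> i j.
  have : \sum_k (Rl i j k)^`M(k) = 0.
    by rewrite big1 // => k _; rewrite Rall mderiv0.
  rewrite /Rl.
  under eq_bigr do rewrite mderivD mderivB !mderivM !mderiv_Xi.
  rewrite !big_split /= sumrN big_split /= !sum_delta.
  have e : \sum_(k < n.+1) (k == k)%:R * F i j = F i j *+ n.+1.
    by rewrite (eq_bigr (fun=> F i j)) ?sumr_const ?card_ord // => k _; rewrite eqxx mul1r.
  rewrite e (euler (HF i j)) -!mulr_sumr -/(G j) -/(G i) (FA i j).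
  move: (G i) (G j) (F i j) => a b x h.
  exact: aux_lin h.
pose c : R[i] := (n + d')%:R.
have c0 : c != 0 by rewrite /c pnatr_eq0; lia.
exists (fun a => - (c^-1 *: G a)); split.
  move=> a; rewrite rpredN rpredZ // rpred_sum // => k _.
  exact: mderiv_homog (HF a k).
move=> i j hij.
have -> : f i j = F i j by rewrite /F hij.
rewrite !mulrN -!scalerAr opprK addrC -scalerBr -opprB eqG opprK.
by rewrite mulr_natr -scaler_nat scalerA mulVf ?scale1r.
Qed.
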